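(* Let $\mathcal{X}=\{x_1,\dots,x_n\}$, $\mathcal{X}_{\mathrm{in}}\subseteq\mathcal{X}$ with $n_{\mathrm{in}}$ points, and $1\le n_{\mathrm{out}}\le n_{\mathrm{in}}$. For any SPSD $K\in\mathbb{R}^{n\times n}$, uniform subsampling without replacement (returning a uniformly random size-$n_{\mathrm{out}}$ subset of $\mathcal{X}_{\mathrm{in}}$) is a $(K,\nu,0)$-sub-Gaussian thinning algorithm with $\nu=\sqrt{\|K\|_{\max}}/\sqrt{n_{\mathrm{out}}}$.
   Context: $\|K\|_{\max}$ is the largest absolute entry of $K$. $p_{\mathrm{in},i}=\mathbf{1}\{x_i\in\mathcal{X}_{\mathrm{in}}\}/n_{\mathrm{in}}$, $q_{\mathrm{out},i}=\mathbf{1}\{x_i\in\mathcal{X}_{\mathrm{out}}\}/n_{\mathrm{out}}$. A thinning algorithm is $(K,\nu,\delta)$-sub-Gaussian if $K$ is SPSD, $\nu>0$, $\delta\in[0,1)$ and there is an event $\mathcal{E}$ with $\mathbb{P}(\mathcal{E})\ge1-\delta/2$ such that $\mathbb{E}[\exp(\langle u,K(p_{\mathrm{in}}-q_{\mathrm{out}})\rangle)\mathbf{1}_{\mathcal{E}}]\le\exp(\frac{\nu^2}{2}u^\top Ku)$ for all $u\in\mathbb{R}^n$. *)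

(* Defs.v *)
From mathcomp Require Import all_boot all_order all_algebra.
From mathcomp Require Import reals.
From mathcomp Require Import sequences exp.
Set Implicit Arguments. Unset Strict Implicit. Unset Printing Implicit Defensive.
Import Order.TTheory GRing.Theory Num.Theory.
Local Open Scope ring_scope.

Section Defs.
Variables (R : realType) (n : nat).

Definition qform (x : 'cV[R]_n) (A : 'M[R]_n) (y : 'cV[R]_n) : R :=
  (x^T *m A *m y) 0 0.

Definition spsd (K : 'M[R]_n) : Prop :=
  K^T = K /\ forall u : 'cV[R]_n, 0 <= qform u K u.

Definition maxabs (K : 'M[R]_n) : R :=
  \big[Num.max/0]_(i < n) \big[Num.max/0]_(j < n) `|K i j|.

(* p_in (indices of X_in are the set S) and q_out (output set T) *)
Definition pin (S : {set 'I_n}) : 'cV[R]_n :=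
  \col_i ((i \in S)%:R / #|S|%:R).
Definition qout (T : {set 'I_n}) (nout : nat) : 'cV[R]_n :=
  \col_i ((i \in T)%:R / nout%:R).

(* A thinning algorithm is described by the law [mu] of its random output
   (a subset T of indices, of size nout), mu T = P(output = T). *)
Definition subgaussian_thinning (K : 'M[R]_n) (nu delta : R)
  (S : {set 'I_n}) (nout : nat) (mu : {set 'I_n} -> R) : Prop :=
  spsd K /\ 0 < nu /\ 0 <= delta < 1 /\
  exists E : {set {set 'I_n}},
    1 - delta / 2 <= \sum_(T in E) mu T /\
    forall u : 'cV[R]_n,
      \sum_(T in E) mu T * expR (qform u K (pin S - qout T nout))
        <= expR (nu ^+ 2 / 2 * qform u K u).

Definition subsets_of (S : {set 'I_n}) (nout : nat) : {set {set 'I_n}} :=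
  [set T : {set 'I_n} | (T \subset S) && (#|T| == nout)].

Definition uniform_subsample (S : {set 'I_n}) (nout : nat) (T : {set 'I_n}) : R :=
  if T \in subsets_of S nout then 1 / #|subsets_of S nout|%:R else 0.

End Defs.

(* Main.v *)
Require Import Defs.
From mathcomp Require Import all_boot all_order all_algebra.
From mathcomp Require Import reals.
From mathcomp Require Import sequences exp.
From mathcomp Require Import boolp topology normedtype derive realfun.
From mathcomp Require Import ring lra.
Import numFieldNormedType.Exports.
Import Order.TTheory GRing.Theory Num.Theory.
Local Open Scope ring_scope.


Section Hoeff.
Variable R : realType.

Lemma mvt_all (f df : R -> R) (a b : R) : a <= b ->
  (forall x : R, is_derive x 1 f (df x)) ->
  exists2 c, a <= c <= b & f b - f a = df c * (b - a).
Proof.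
move=> ab hd.
have [|c cab ->] := MVT_segment ab (fun x _ => hd x).
  apply: derivable_within_continuous => x _.
  by case: (hd x).
by exists c => //; move: cab; rewrite in_itv.
Qed.

Arguments mvt_all {f df a b}.
Variable p : R.
Hypothesis p0 : 0 <= p.
Hypothesis p1 : p <= 1.

Let D (h : R) := 1 - p + p * expR h.
Let D_gt0 h : 0 < D h.
Proof.
rewrite /D; have [->|pp] := eqVneq p 0; first by rewrite mul0r subr0 addr0.
have : 0 < p * expR h by rewrite mulr_gt0 ?expR_gt0 // lt_neqAle eq_sym pp p0.
move: p1; lra.
Qed.

Let q (h : R) := p * expR h / D h.

Let q_derive (x : R) : is_derive x 1 q (q x * (1 - q x)).
Proof.
have hE : is_derive x 1 (fun h : R => p * expR h) (p * expR x).
  by apply: is_derive_eq.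
have hD : is_derive x 1 D (p * expR x).
  rewrite /D; apply: is_derive_eq; rewrite /GRing.scale /=; ring.
have hV := is_deriveV (lt0r_neq0 (D_gt0 x)) hD.
have hM := is_deriveM hE hV.
apply: is_derive_eq hM _.
rewrite /q /= /GRing.scale /=.
have := D_gt0 x; move: (D x) => d d0.
field; lra.
Qed.

Let q0 : q 0 = p.
Proof. by rewrite /q /D expR0 mulr1 subrK divr1. Qed.

Let q_bnd h : q h * (1 - q h) <= 1 / 4.
Proof. have := sqr_ge0 (q h - 1/2); rewrite expr2. lra. Qed.

Let step1_pos h : 0 <= h -> q h - p - h / 4 <= 0.
Proof.
move=> h0; have [c _ E] := mvt_all h0 q_derive.
rewrite q0 subr0 in E.
have := q_bnd c; have : q c * (1 - q c) * h <= 1/4 * h by rewrite ler_wpM2r.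
lra.
Qed.

Let step1_neg h : h <= 0 -> 0 <= q h - p - h / 4.
Proof.
move=> h0; have [c _ E] := mvt_all h0 q_derive.
rewrite q0 sub0r in E.
have : q c * (1 - q c) * (- h) <= 1/4 * (- h) by rewrite ler_wpM2r ?q_bnd // oppr_ge0.
lra.
Qed.

Let phi (h : R) := expR (- (p * h + h ^+ 2 / 8)) * D h.

Let phi_derive (x : R) : is_derive x 1 phi
   (expR (- (p * x + x ^+ 2 / 8)) * D x * (q x - p - x / 4)).
Proof.
have hD : is_derive x 1 D (p * expR x).
  rewrite /D; apply: is_derive_eq; rewrite /GRing.scale /=; ring.
have hA : is_derive x 1 (fun h : R => - (p * h + h ^+ 2 / 8)) (- (p + x / 4)).
  apply: is_derive_eq.
  by rewrite /GRing.scale /=; field.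
have hC := is_derive1_comp (is_derive_expR _) hA.
have hM := is_deriveM hC hD.
apply: is_derive_eq hM _.
rewrite /GRing.scale /= /q.
have := D_gt0 x; move: (D x) => d d0.
field; lra.
Qed.

Let phi0 : phi 0 = 1.
Proof. by rewrite /phi /D expR0 mulr1 subrK expr0n /= mul0r mulr0 addr0 oppr0 expR0 mulr1. Qed.

Let phi_le1 h : phi h <= 1.
Proof.
have [h0|h0] := leP 0 h.
  have [c /andP[c0 ch] E] := mvt_all h0 phi_derive.
  rewrite phi0 subr0 in E.
  have : expR (- (p * c + c ^+ 2 / 8)) * D c * (q c - p - c / 4) * h <= 0.
    rewrite mulr_le0_ge0 // mulr_ge0_le0 ?step1_pos //.
    by rewrite mulr_ge0 // ?expR_ge0 // ltW.
  lra.
have h0' := ltW h0.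
have [c /andP[c0 ch] E] := mvt_all h0' phi_derive.
rewrite phi0 sub0r in E.
have : 0 <= expR (- (p * c + c ^+ 2 / 8)) * D c * (q c - p - c / 4) * (- h).
  apply: mulr_ge0; last by rewrite oppr_ge0.
  apply: mulr_ge0; last exact: step1_neg.
  by apply: mulr_ge0; [exact: expR_ge0 | exact: ltW (D_gt0 c)].
lra.
Qed.

Lemma hoeff_core h : 1 - p + p * expR h <= expR (p * h + h ^+ 2 / 8).
Proof.
have := phi_le1 h; rewrite /phi -/(D h).
rewrite expRN mulrC.
by rewrite ler_pdivrMr ?expR_gt0 // mul1r.
Qed.

End Hoeff.

Section HoeffAvg.
Variable R : realType.

Lemma chord (a b t z : R) : a <= z -> z <= b ->
  (b - a) * expR (t * z) <= (b - z) * expR (t * a) + (z - a) * expR (t * b).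
Proof.
move=> az zb.
have ea : expR (t * a) = expR (t * z) * expR (t * (a - z)) by rewrite -expRD; congr expR; ring.
have eb : expR (t * b) = expR (t * z) * expR (t * (b - z)) by rewrite -expRD; congr expR; ring.
rewrite ea eb.
have E0 : 0 <= expR (t * z) := expR_ge0 _.
have h1 : (b - z) * (expR (t * z) * (1 + t * (a - z))) <= (b - z) * (expR (t * z) * expR (t * (a - z))).
  by rewrite ler_wpM2l ?subr_ge0 // ler_wpM2l // expR_ge1Dx.
have h2 : (z - a) * (expR (t * z) * (1 + t * (b - z))) <= (z - a) * (expR (t * z) * expR (t * (b - z))).
  by rewrite ler_wpM2l ?subr_ge0 // ler_wpM2l // expR_ge1Dx.
have -> : (b - a) * expR (t * z) = (b - z) * (expR (t * z) * (1 + t * (a - z)))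
     + (z - a) * (expR (t * z) * (1 + t * (b - z))) by ring.
exact: lerD.
Qed.

Lemma hoeff_avg (I : finType) (A : {set I}) (z : I -> R) (a b t : R) :
  (0 < #|A|)%N -> (forall i, i \in A -> a <= z i <= b) ->
  (\sum_(i in A) expR (t * z i)) / #|A|%:R <=
  expR (t * ((\sum_(i in A) z i) / #|A|%:R) + t ^+ 2 * (b - a) ^+ 2 / 8).
Proof.
move=> A0 zab.
set N : R := #|A|%:R.
have N0 : 0 < N by rewrite ltr0n.
set s := \sum_(i in A) expR (t * z i).
set Z := \sum_(i in A) z i.
have [i0 i0A] : exists i, i \in A by apply/card_gt0P.
have ab : a <= b by have /andP[h1 h2] := zab _ i0A; exact: le_trans h2.
have Zlo : a * N <= Z.
  rewrite /N mulr_natr -sumr_const /Z.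
  by apply: ler_sum => i /zab /andP[].
have Zhi : Z <= b * N.
  rewrite /N mulr_natr -sumr_const /Z.
  by apply: ler_sum => i /zab /andP[].
have [eab|ltab] := eqVneq a b.
  subst b.
  have zE i : i \in A -> z i = a by move=> /zab; rewrite -eq_le => /eqP.
  rewrite /s /Z; under eq_bigr => i iA do rewrite (zE i iA).
  under [X in _ <= expR (t * (X / _) + _)]eq_bigr => i iA do rewrite (zE i iA).
  rewrite !sumr_const -[expR (t * a) *+ _]mulr_natr -[a *+ _]mulr_natr.
  rewrite subrr expr0n /= mulr0 mul0r addr0.
  by rewrite -!mulrA mulfV ?gt_eqF // !mulr1.
have ltab' : a < b by rewrite lt_neqAle ltab.
have ba0 : 0 < b - a by rewrite subr_gt0.
set p := (Z / N - a) / (b - a).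
set h := t * (b - a).
have ZN1 : a <= Z / N by rewrite ler_pdivlMr.
have ZN2 : Z / N <= b by rewrite ler_pdivrMr.
have p0 : 0 <= p.
  by rewrite /p divr_ge0 // ?subr_ge0 // ltW.
have p1 : p <= 1.
  rewrite /p ler_pdivrMr // mul1r; lra.
have core := @hoeff_core R p p0 p1 h.
have sum_chord : (b - a) * s <= (b * N - Z) * expR (t * a) + (Z - a * N) * expR (t * b).
  rewrite /s mulr_sumr.
  apply: (le_trans (y := \sum_(i in A) ((b - z i) * expR (t * a) + (z i - a) * expR (t * b)))) .
    by apply: ler_sum => i /zab /andP[h1 h2]; apply: chord.
  rewrite big_split /= -!mulr_suml !sumrB !sumr_const /N !mulr_natr.
  by [].
have etb : expR (t * b) = expR (t * a) * expR h by rewrite -expRD /h; congr expR; ring.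
have RHS : expR (t * (Z / N) + t ^+ 2 * (b - a) ^+ 2 / 8) = expR (t * a) * expR (p * h + h ^+ 2 / 8).
  rewrite -expRD; congr expR; rewrite /p /h; field.
  by rewrite !gt_eqF // -/N.
rewrite RHS.
apply: (le_trans (y := expR (t * a) * (1 - p + p * expR h))); last first.
  by rewrite ler_wpM2l ?expR_ge0.
have -> : expR (t * a) * (1 - p + p * expR h) =
   ((b * N - Z) * expR (t * a) + (Z - a * N) * expR (t * b)) / ((b - a) * N).
  rewrite etb /p; field.
  by rewrite !gt_eqF // -/N.
have -> : s / N = ((b - a) * s) / ((b - a) * N).
  by field; rewrite !gt_eqF // -/N.
by rewrite ler_wpM2r // invr_ge0 mulr_ge0 // ltW.
Qed.

End HoeffAvg.


Section Mac.
Variable R : realType.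
Variable I : finType.
Variable x : I -> R.
Hypothesis x0 : forall i, 0 <= x i.

Definition esym (k : nat) (S : {set I}) : R :=
  \sum_(T : {set I} | (T \subset S) && (#|T| == k)) \prod_(i in T) x i.

Lemma esym_ge0 k S : 0 <= esym k S.
Proof. by apply: sumr_ge0 => T _; apply: prodr_ge0 => i _. Qed.

Lemma esym0 S : esym 0 S = 1.
Proof.
rewrite /esym (big_pred1 set0) ?big_set0 // => T /=.
rewrite cards_eq0; case: (T =P set0) => [->|_]; by rewrite ?sub0set ?andbF.
Qed.

Lemma reidx j (S : {set I}) k (F : {set I} -> R) : j \in S ->
  \sum_(T : {set I} | ((T \subset S) && (#|T| == k.+1)) && (j \in T)) F (T :\ j)
  = \sum_(T : {set I} | (T \subset S :\ j) && (#|T| == k)) F T.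
Proof.
move=> jS.
rewrite (reindex_onto (fun T => j |: T) (fun T => T :\ j)) /=; last first.
  by move=> T /andP[_ jT]; rewrite setD1K.
apply: eq_big => T.
  rewrite subsetD1 setU11 andbT.
  case jT: (j \in T).
    have -> : ((j |: T) :\ j == T) = false.
      by apply/negbTE/eqP => E; move: jT; rewrite -E setD11.
    by rewrite /= !andbF.
  rewrite setU1K ?jT // eqxx andbT cardsU1 jT add1n eqSS.
  by rewrite subUset sub1set jS /= andbT.
by move=> /andP[_ /eqP ->].
Qed.

Lemma esym_split j (S : {set I}) k : j \in S ->
  esym k.+1 S = esym k.+1 (S :\ j) + x j * esym k (S :\ j).
Proof.
move=> jS; rewrite /esym [LHS](bigID (fun T : {set I} => j \in T)) /= addrC; congr (_ + _).
  apply: eq_bigl => T; rewrite subsetD1; case: (j \in T); by rewrite ?andbF ?andbT.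
rewrite mulr_sumr -(@reidx j S _ (fun T => x j * \prod_(i in T) x i) jS).
by apply: eq_bigr => T /andP[_ jT]; rewrite (big_setD1 _ jT).
Qed.

Lemma esym_count (S : {set I}) k :
  \sum_(j in S) x j * esym k (S :\ j) = k.+1%:R * esym k.+1 S.
Proof.
transitivity (\sum_(j in S) \sum_(T : {set I} | ((T \subset S) && (#|T| == k.+1)) && (j \in T))
   x j * \prod_(i in T :\ j) x i).
  apply: eq_bigr => j jS; rewrite /esym mulr_sumr.
  by rewrite -(@reidx j S _ (fun T => x j * \prod_(i in T) x i) jS).
rewrite (exchange_big_dep (fun T : {set I} => (T \subset S) && (#|T| == k.+1))) /=; last first.
  by move=> j T _ /andP[].
rewrite /esym mulr_sumr; apply: eq_bigr => T /andP[TS /eqP cT].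
have -> : k.+1%:R = \sum_(i in T) (1:R) by rewrite sumr_const cT.
rewrite mulr_suml; apply: eq_big => j.
  rewrite TS cT eqxx /=.
  by case jT: (j \in T); rewrite ?andbF // andbT (subsetP TS).
by move=> /andP[_ /andP[_ jT]]; rewrite mul1r -(big_setD1 _ jT).
Qed.

Lemma esym1 (S : {set I}) : esym 1 S = \sum_(j in S) x j.
Proof.
have := esym_count S 0; rewrite mul1r => <-.
by apply: eq_bigr => j _; rewrite esym0 mulr1.
Qed.

Lemma esym_loo (S : {set I}) k :
  \sum_(j in S) esym k (S :\ j) = #|S|%:R * esym k S - k%:R * esym k S.
Proof.
case: k => [|k].
  under eq_bigr do rewrite esym0.
  by rewrite sumr_const esym0 mul0r subr0 mulr1.
transitivity (\sum_(j in S) (esym k.+1 S - x j * esym k (S :\ j))).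
  by apply: eq_bigr => j jS; rewrite (esym_split _ _ _ jS) addrK.
by rewrite sumrB esym_count sumr_const !mulr_natl.
Qed.

Lemma esym_pair (S : {set I}) i j k : i \in S -> j \in S ->
  0 <= (x i - x j) * (esym k (S :\ j) - esym k (S :\ i)).
Proof.
move=> iS jS.
have [->|ij] := eqVneq i j; first by rewrite subrr mul0r.
case: k => [|k]; first by rewrite !esym0 subrr mulr0.
have iSj : i \in S :\ j by rewrite in_setD1 ij.
have jSi : j \in S :\ i by rewrite in_setD1 eq_sym ij.
rewrite (esym_split _ _ _ iSj) (esym_split _ _ _ jSi).
have -> : (S :\ i) :\ j = (S :\ j) :\ i by rewrite !setDDl setUC.
have e0 := esym_ge0 k ((S :\ j) :\ i).
move: (esym k.+1 _) (esym k _) e0 => f e e0.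
have -> : (x i - x j) * (f + x i * e - (f + x j * e)) = (x i - x j) ^+ 2 * e by ring.
by rewrite mulr_ge0 // sqr_ge0.
Qed.

Lemma newton (S : {set I}) k :
  #|S|%:R * k.+1%:R * esym k.+1 S <= (#|S|%:R - k%:R) * esym 1 S * esym k S.
Proof.
set X := \sum_(i in S) \sum_(j in S) (x i - x j) * esym k (S :\ j).
have XE : X = (#|S|%:R - k%:R) * esym 1 S * esym k S - #|S|%:R * k.+1%:R * esym k.+1 S.
  have -> : X = \sum_(i in S) \sum_(j in S) (x i * esym k (S :\ j))
              - \sum_(i in S) \sum_(j in S) (x j * esym k (S :\ j)).
    rewrite -sumrB; apply: eq_bigr => i _; rewrite -sumrB.
    by apply: eq_bigr => j _; rewrite mulrBl.
  have A : \sum_(i in S) \sum_(j in S) (x i * esym k (S :\ j))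
     = esym 1 S * (#|S|%:R * esym k S - k%:R * esym k S).
    rewrite -esym_loo esym1 big_distrl /=.
    by apply: eq_bigr => i _; rewrite mulr_sumr.
  have B : \sum_(i in S) \sum_(j in S) (x j * esym k (S :\ j))
     = #|S|%:R * (k.+1%:R * esym k.+1 S).
    under eq_bigr do rewrite esym_count.
    by rewrite sumr_const [RHS]mulr_natl.
  rewrite A B; ring.
have X2 : X + X = \sum_(i in S) \sum_(j in S)
     (x i - x j) * (esym k (S :\ j) - esym k (S :\ i)).
  rewrite {2}/X exchange_big /=.
  rewrite -big_split /=; apply: eq_bigr => i _; rewrite -big_split /=.
  by apply: eq_bigr => j _; ring.
have : 0 <= X + X.
  by rewrite X2; apply: sumr_ge0 => i iS; apply: sumr_ge0 => j jS; apply: esym_pair.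
rewrite XE; lra.
Qed.

Lemma maclaurin (S : {set I}) k : (k <= #|S|)%N ->
  esym k S * #|S|%:R ^+ k <= 'C(#|S|, k)%:R * esym 1 S ^+ k.
Proof.
elim: k => [|k IH] hk; first by rewrite esym0 !expr0 bin0 mulr1.
have hk' : (k <= #|S|)%N by apply: ltnW.
have IHk := IH hk'.
have kpos : 0 < k.+1%:R :> R by rewrite ltr0n.
rewrite -(ler_pM2l kpos).
have NK : 0 <= #|S|%:R - k%:R :> R by rewrite subr_ge0 ler_nat.
have e1 := esym_ge0 1 S.
have Nk0 : 0 <= #|S|%:R ^+ k :> R by rewrite exprn_ge0.
have -> : k.+1%:R * ('C(#|S|, k.+1)%:R * esym 1 S ^+ k.+1)
   = (#|S|%:R - k%:R) * esym 1 S * ('C(#|S|, k)%:R * esym 1 S ^+ k) :> R.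
  rewrite mulrA -natrM mul_bin_left natrM natrB // exprS; ring.
apply: (le_trans (y := (#|S|%:R - k%:R) * esym 1 S * (esym k S * #|S|%:R ^+ k))); last first.
  by rewrite ler_wpM2l // mulr_ge0.
have := newton S k.
have -> : k.+1%:R * (esym k.+1 S * #|S|%:R ^+ k.+1) =
   (#|S|%:R * k.+1%:R * esym k.+1 S) * #|S|%:R ^+ k :> R by rewrite exprS; ring.
have -> : (#|S|%:R - k%:R) * esym 1 S * (esym k S * #|S|%:R ^+ k) =
   ((#|S|%:R - k%:R) * esym 1 S * esym k S) * #|S|%:R ^+ k :> R by ring.
by move=> h; rewrite ler_wpM2r.
Qed.

End Mac.


Section Q.
Variables (R : realType) (n : nat).
Implicit Types (x y z u v : 'cV[R]_n) (K : 'M[R]_n).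

Lemma qformDl x y z K : qform (x + y) K z = qform x K z + qform y K z.
Proof. by rewrite /qform linearD /= !mulmxDl mxE. Qed.

Lemma qformZl (l : R) x z K : qform (l *: x) K z = l * qform x K z.
Proof. by rewrite /qform linearZ /= -!scalemxAl mxE. Qed.

Lemma qformDr x y z K : qform x K (y + z) = qform x K y + qform x K z.
Proof. by rewrite /qform mulmxDr mxE. Qed.

Lemma qformZr (l : R) x z K : qform x K (l *: z) = l * qform x K z.
Proof. by rewrite /qform -scalemxAr mxE. Qed.

Lemma qform_sym x y K : K^T = K -> qform y K x = qform x K y.
Proof.
move=> KT; rewrite /qform.
transitivity (((y^T *m K *m x)^T) 0 0); first by rewrite [RHS]mxE.
by rewrite !trmx_mul trmxK KT mulmxA.
Qed.

Lemma qform_CS x y K : spsd K -> qform x K y ^+ 2 <= qform x K x * qform y K y.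
Proof.
move=> [KT Kp].
have f l : 0 <= qform x K x + 2 * l * qform x K y + l ^+ 2 * qform y K y.
  have := Kp (x + l *: y).
  rewrite !qformDl !qformDr !qformZl !qformZr (qform_sym x y K KT).
  suff -> : qform x K x + l * qform x K y + (l * qform x K y + l * (l * qform y K y)) =
    qform x K x + 2 * l * qform x K y + l ^+ 2 * qform y K y by [].
  ring.
set a := qform x K x in f *; set b := qform x K y in f *; set c := qform y K y in f *.
have c0 : 0 <= c by apply: Kp.
have a0 : 0 <= a by apply: Kp.
have [c0'|cpos] := eqVneq c 0.
  have [b0|bn0] := eqVneq b 0; first by rewrite b0 c0' expr0n /= mulr0.
  have := f (- (a + 1) / (2 * b)).
  rewrite c0' mulr0 addr0.
  have -> : 2 * (- (a + 1) / (2 * b)) * b = - (a + 1) by field; rewrite bn0.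
  lra.
have cp : 0 < c by rewrite lt_neqAle eq_sym cpos c0.
have := f (- b / c).
have -> : a + 2 * (- b / c) * b + (- b / c) ^+ 2 * c = a - b ^+ 2 / c.
  by field; rewrite cpos.
by rewrite subr_ge0 ler_pdivrMr // mulrC.
Qed.

Lemma qform_Kmul u v K : K^T = K ->
  qform u K v = \sum_j (K *m u) j 0 * v j 0.
Proof.
move=> KT; rewrite (qform_sym v u K KT) /qform -mulmxA mxE.
by apply: eq_bigr => j _; rewrite mulrC [v^T 0 j]mxE.
Qed.

End Q.


Lemma sum_delta (R : realType) n (f : 'I_n -> R) (i : 'I_n) :
  \sum_j f j * (delta_mx i (0 : 'I_1) : 'cV[R]_n) j 0 = f i.
Proof.
rewrite (bigD1 i) //= mxE !eqxx /= mulr1 big1 ?addr0 // => j ji.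
by rewrite mxE (negbTE ji) /= mulr0.
Qed.

Lemma sum_ind (R : realType) n (w : 'I_n -> R) (A : {set 'I_n}) (c : R) :
  \sum_j w j * ((j \in A)%:R / c) = (\sum_(j in A) w j) / c.
Proof.
rewrite [in RHS]big_mkcond /= mulr_suml; apply: eq_bigr => j _.
by case: (j \in A); rewrite /= ?mul1r ?mul0r ?mulr0.
Qed.

Theorem propositionB1 (R : realType) (n : nat) (S : {set 'I_n}) (nout : nat)
  (K : 'M[R]_n) :
  (1 <= nout)%N -> (nout <= #|S|)%N ->
  spsd K -> K != 0 ->
  subgaussian_thinning K (Num.sqrt (maxabs K) / Num.sqrt nout%:R) 0 S nout
    (uniform_subsample R S nout).
Proof.
move=> m1 mS Ksp Kn0.
have [KT Kpsd] := Ksp.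
set M := maxabs K.
have Mij i j : `|K i j| <= M.
  apply: (le_trans _ (le_bigmax _ (fun i => \big[Num.max/0]_(j < n) `|K i j|) i)).
  exact: (le_bigmax _ (fun j => `|K i j|) j).
have M0 : 0 < M.
  rewrite lt_neqAle; apply/andP; split; last exact: bigmax_ge_id.
  apply/negP => /eqP M0; move/negP: Kn0; apply; apply/eqP/matrixP => i j.
  by rewrite mxE; apply/eqP; rewrite -normr_le0 M0 Mij.
have m0 : 0 < nout%:R :> R by rewrite ltr0n.
have N0 : (0 < #|S|)%N by apply: leq_trans mS.
have N0r : 0 < #|S|%:R :> R by rewrite ltr0n.
set C := #|subsets_of S nout|.
have CE : C = 'C(#|S|, nout) by rewrite /C /subsets_of cards_draws.
have C0 : 0 < C%:R :> R by rewrite ltr0n CE bin_gt0.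
have nu2 : (Num.sqrt M / Num.sqrt nout%:R) ^+ 2 = M / nout%:R.
  by rewrite expr_div_n !sqr_sqrtr // ltW.
split => //; split; first by rewrite divr_gt0 ?sqrtr_gt0.
split; first by rewrite lexx ltr01.
exists (subsets_of S nout); split.
  rewrite mul0r subr0 /uniform_subsample.
  under eq_bigr => T TE do rewrite TE.
  by rewrite sumr_const -/C -[_ *+ C]mulr_natr div1r mulVf ?gt_eqF.
move=> u.
set w := fun i => (K *m u) i 0.
set Q := qform u K u.
have Q0 : 0 <= Q by apply: Kpsd.
set Rr := Num.sqrt (M * Q).
have wab i : - Rr <= w i <= Rr.
  rewrite -ler_norml /Rr -sqrtr_sqr ler_wsqrtr //.
  have := @qform_CS R n (delta_mx i 0) u K Ksp.
  have -> : qform (delta_mx i 0) K u = w i.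
    by rewrite (@qform_sym R n u (delta_mx i 0) K KT) (@qform_Kmul R n _ _ _ KT) sum_delta.
  have -> : qform (delta_mx i 0) K (delta_mx i 0) = K i i.
    rewrite (@qform_Kmul R n _ _ _ KT) sum_delta mxE.
    rewrite (bigD1 i) //= mxE !eqxx /= mulr1 big1 ?addr0 // => j ji.
    by rewrite mxE (negbTE ji) /= mulr0.
  move=> h; apply: (le_trans h); rewrite -/Q ler_wpM2r //.
  exact: le_trans (ler_norm _) (Mij i i).
set t : R := - (nout%:R)^-1.
set x := fun i => expR (t * w i).
set wbar := (\sum_(i in S) w i) / #|S|%:R.
have qE T : qform u K (pin R S - qout R T nout) = wbar - (\sum_(i in T) w i) / nout%:R.
  have pqE j : (pin R S - qout R T nout) j 0 = (j \in S)%:R / #|S|%:R - (j \in T)%:R / nout%:R.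
    by rewrite !mxE.
  rewrite (@qform_Kmul R n _ _ _ KT).
  under eq_bigr => j _ do rewrite pqE mulrBr.
  by rewrite sumrB !sum_ind.
have eT T : expR (wbar - (\sum_(i in T) w i) / nout%:R) = expR wbar * \prod_(i in T) x i.
  rewrite expRD -expR_sum; congr (_ * expR _).
  rewrite mulr_suml -sumrN; apply: eq_bigr => i _; rewrite /t; ring.
have x0 i : 0 <= x i by apply: expR_ge0.
rewrite [X in X <= _](_ : _ = C%:R^-1 * expR wbar * @esym R _ x nout S); last first.
  rewrite /esym mulr_sumr /uniform_subsample.
  apply: eq_big => [T|T TE]; first by rewrite inE.
  by rewrite TE qE eT div1r mulrA.
have Mac := @maclaurin R _ x x0 S nout mS.
rewrite (@esym1 R _ x S) -CE in Mac.
have Hf := @hoeff_avg R _ S w (- Rr) Rr t N0 (fun i _ => wab i).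
set H := expR _ in Hf.
have Hf' : (\sum_(i in S) x i) / #|S|%:R <= H := Hf.
have e10 : 0 <= \sum_(i in S) x i by apply: sumr_ge0.
have e1le : \sum_(i in S) x i <= H * #|S|%:R by rewrite -ler_pdivrMr.
have pw : (\sum_(i in S) x i) ^+ nout <= (H * #|S|%:R) ^+ nout.
  by apply: lerXn2r; rewrite // qualifE /= mulr_ge0 // ?expR_ge0 // ltW.
have Nm0 : 0 < #|S|%:R ^+ nout :> R by rewrite exprn_gt0.
have eb : @esym R _ x nout S <= C%:R * H ^+ nout.
  rewrite -(ler_pM2r Nm0); apply: (le_trans Mac).
  rewrite -mulrA -exprMn; apply: ler_wpM2l; first exact: ltW.
  exact: pw.
apply: (le_trans (y := C%:R^-1 * expR wbar * (C%:R * H ^+ nout))).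
  by rewrite ler_wpM2l // mulr_ge0 ?expR_ge0 // invr_ge0 ltW.
rewrite mulrC -mulrA.
have -> : C%:R * H ^+ nout * (C%:R^-1 * expR wbar) = expR wbar * H ^+ nout.
  by field; rewrite gt_eqF.
rewrite /H -expRM_natl -expRD nu2.
have RQ : Rr ^+ 2 = M * Q by rewrite /Rr sqr_sqrtr // mulr_ge0 // ltW.
suff -> : wbar + nout%:R * (t * ((\sum_(i in S) w i) / #|S|%:R) + t ^+ 2 * (Rr - - Rr) ^+ 2 / 8)
   = M / nout%:R * (2^-1 * Q) by [].
rewrite -/wbar.
have -> : t ^+ 2 * (Rr - - Rr) ^+ 2 / 8 = t ^+ 2 * (Rr ^+ 2) / 2 by field.
rewrite RQ /t; field.
by rewrite gt_eqF.
Qed.
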